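(* Let $k>2$, $n\ge1$, and let $\sigma:Z_k\to Z_k$ be a map. Define $\psi_\sigma:P_k^n\to P_k^n$ by $\psi_\sigma(f)(\bar a)=\sigma(f(\bar a))$ for all $\bar a\in Z_k^n$. Then $f\simeq_{cmr}\psi_\sigma(f)$ for all $f\in P_k^n$ if and only if $\sigma$ is a permutation of $Z_k$.
   Context: $Z_k=\{0,\dots,k-1\}$; $P_k^n$ is the set of all maps $Z_k^n\to Z_k$ in variables $x_1,\dots,x_n$. $x_i$ is essential in $f$ if changing only the $i$-th argument can change the value of $f$; $Ess(f)$, $ess(f)=|Ess(f)|$. For distinct essential $x_i,x_j$, $f_{i\leftarrow j}(a_1,\dots,a_n)=f(a_1,\dots,a_{i-1},a_j,a_{i+1},\dots,a_n)$. The relation $f\simeq_{cmr}g$ is defined recursively: if $ess(f)\le1$ it means $ess(f)=ess(g)$; if $ess(f)\ge2$ it means $ess(f)=ess(g)$ and there is a permutation $\sigma'$ of $\{1,\dots,n\}$ with $f_{i\leftarrow j}\simeq_{cmr} g_{\sigma'(i)\leftarrow\sigma'(j)}$ for all $j<i$ with $x_i,x_j\in Ess(f)$. *)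

(* Defs.v *)
From mathcomp Require Import all_boot all_fingroup.
Set Implicit Arguments. Unset Strict Implicit. Unset Printing Implicit Defensive.

(* Z_k = 'I_k ; Z_k^n = {ffun 'I_n -> 'I_k} ; P_k^n = functions Z_k^n -> Z_k *)
Definition tup (k n : nat) := {ffun 'I_n -> 'I_k}.
Definition fn (k n : nat) := tup k n -> 'I_k.

Definition essential k n (f : fn k n) (i : 'I_n) : bool :=
  [exists a : tup k n, exists b : tup k n,
     [forall j, (j != i) ==> (a j == b j)] && (f a != f b)].

Definition Ess k n (f : fn k n) : {set 'I_n} := [set i | essential f i].
Definition ess k n (f : fn k n) : nat := #|Ess f|.

Definition ident k n (f : fn k n) (i j : 'I_n) : fn k n :=
  fun a => f [ffun l => if l == i then a j else a l].

Inductive cmr k n : fn k n -> fn k n -> Prop :=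
| cmr_base (f g : fn k n) :
    ess f <= 1 -> ess f = ess g -> cmr f g
| cmr_step (f g : fn k n) :
    2 <= ess f -> ess f = ess g ->
    (exists s : {perm 'I_n}, forall i j : 'I_n,
        j < i -> essential f i -> essential f j ->
        cmr (ident f i j) (ident g (s i) (s j))) ->
    cmr f g.

Definition psi k n (sigma : 'I_k -> 'I_k) (f : fn k n) : fn k n :=
  fun a => sigma (f a).

(* Main.v *)
Require Import Defs.
From mathcomp Require Import all_boot all_fingroup.
Set Implicit Arguments. Unset Strict Implicit. Unset Printing Implicit Defensive.

Lemma cmr_ess k n (f g : fn k n) : cmr f g -> ess f = ess g.
Proof. by case. Qed.

Lemma ess_psi k n (sigma : 'I_k -> 'I_k) (f : fn k n) :
  injective sigma -> forall i, essential (psi sigma f) i = essential f i.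
Proof.
move=> inj i; apply/existsP/existsP => -[a /existsP [b /andP [H1 H2]]];
  exists a; apply/existsP; exists b; rewrite H1 /=.
- by rewrite /psi (inj_eq inj) in H2.
- by rewrite /psi (inj_eq inj).
Qed.

Lemma Ess_ident k n (f : fn k n) (i j : 'I_n) :
  j != i -> essential f j -> Ess (ident f i j) \subset Ess f :\ i.
Proof.
move=> ji Ej; apply/subsetP => l; rewrite !inE => /existsP [a /existsP [b /andP [/forallP H1 H2]]].
have lni : l != i.
  apply/negP => /eqP li; subst l; move: H2; rewrite /ident.
  have -> : [ffun l => if l == i then a j else a l] = [ffun l => if l == i then b j else b l].
    apply/ffunP => m; rewrite !ffunE; case: (m =P i) => [_|/eqP mi].
      by have := H1 j; rewrite ji => /eqP.
    by have := H1 m; rewrite mi => /eqP.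
  by rewrite eqxx.
rewrite lni /=; case: (l =P j) => [->//|/eqP lj].
apply/existsP; exists [ffun m => if m == i then a j else a m].
apply/existsP; exists [ffun m => if m == i then b j else b m].
rewrite H2 andbT; apply/forallP => m; apply/implyP => ml; rewrite !ffunE.
case: (m =P i) => _.
  by have := H1 j; rewrite eq_sym lj => /eqP ->.
by have := H1 m; rewrite ml => /eqP ->.
Qed.

Lemma ess_ident_lt k n (f : fn k n) (i j : 'I_n) :
  j != i -> essential f i -> essential f j -> ess (ident f i j) < ess f.
Proof.
move=> ji Ei Ej; rewrite /ess.
apply: (leq_ltn_trans (subset_leq_card (Ess_ident ji Ej))).
rewrite (cardsD1 i (Ess f)) inE Ei /=.
by rewrite add1n.
Qed.

Theorem theorem17 (k n : nat) (hk : 2 < k) (hn : 1 <= n)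
  (sigma : 'I_k -> 'I_k) :
  (forall f : fn k n, cmr f (psi sigma f)) <-> bijective sigma.
Proof.
split.
- move=> H; apply: injF_bij => u v suv; apply/eqP; apply/negP => /negP uv.
  pose i0 : 'I_n := Ordinal hn.
  pose f : fn k n := fun a => if a i0 == u then u else v.
  have := cmr_ess (H f).
  have E1 : Ess (psi sigma f) = set0.
    apply/setP => i; rewrite !inE /essential; apply/negbTE/negP => /existsP [a /existsP [b /andP [_]]].
    by rewrite /psi /f; case: ifP; case: ifP; rewrite ?suv eqxx.
  have E2 : i0 \in Ess f.
    rewrite inE /essential; apply/existsP; exists [ffun _ => u].
    apply/existsP; exists [ffun m => if m == i0 then v else u].
    rewrite /f !ffunE !eqxx (eq_sym v u) (negbTE uv) uv andbT.
    apply/forallP => m; apply/implyP => /negbTE mi; by rewrite !ffunE mi.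
  rewrite /ess E1 cards0 => /eqP; rewrite cards_eq0 => /eqP E.
  by rewrite E inE in E2.
- case=> tau st ts.
  have inj : injective sigma by apply: can_inj st.
  suff: forall m (f : fn k n), ess f <= m -> cmr f (psi sigma f).
    by move=> H f; apply: (H (ess f)).
  have essE : forall f : fn k n, ess (psi sigma f) = ess f.
    move=> f; rewrite /ess; apply: eq_card => i.
    by rewrite !inE ess_psi.
  elim=> [|m IH] f hf.
    by apply: (@cmr_base _ _ f (psi sigma f)); rewrite ?essE //; apply: leq_trans hf _.
  case: (leqP (ess f) 1) => h1.
    by apply: (@cmr_base _ _ f (psi sigma f)); rewrite ?essE.
  apply: (@cmr_step _ _ f (psi sigma f)); [exact: h1 | by rewrite essE |].
  exists 1%g => i j ji Ei Ej; rewrite !perm1.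
  apply: IH; rewrite -ltnS; apply: leq_trans hf.
  by apply: ess_ident_lt => //; rewrite neq_ltn ji.
Qed.
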